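(* In every $\mathsf{TLAE}$-frame, each of the relations $R_\Box$, $R_\blacksquare$, $R_{\mathsf{H}}$ and $R_{\mathsf{A}}$ is acyclic, i.e., for none of these relations $R$ is there a finite sequence $w_0,w_1,\dots,w_k$ with $k\geq 1$, $w_k=w_0$ and $Rw_{i}w_{i+1}$ for all $0\le i<k$.
   Context: Fix finite sets $\mathtt{Action}=\{\delta_1,\dots,\delta_n\}$ (atomic action types) and $\mathtt{Agent}=\{\alpha_1,\dots,\alpha_m\}$ (agents). The set $\mathtt{Action}^*$ of action types is generated by $\Delta::=\delta_j\mid\Delta\cup\Delta\mid\overline{\Delta}$. For each agent $\alpha_i$ and each $j$ there is a propositional constant $\mathfrak{d}^{\alpha_i}_j$ and for each agent $\alpha_i$ a propositional constant $\mathfrak{e}^{\alpha_i}$. An $\mathcal{L}$-frame is a tuple $\langle W,\{W_{\mathfrak{d}^{\alpha_i}_j}\}_{i,j},\{W_{\mathfrak{e}^{\alpha_i}}\}_{i},R_\Box,R_{\mathsf{A}},R_\blacksquare,R_{\mathsf{H}}\rangle$ where $W$ is a set of moments, each $W_{\mathfrak{d}^{\alpha_i}_j},W_{\mathfrak{e}^{\alpha_i}}\subseteq W$, and $R_\Box,R_{\mathsf{A}},R_\blacksquare,R_{\mathsf{H}}$ are binary relations on $W$. For action types define $W_{t(\delta_j^{\alpha_i})}=W_{\mathfrak{d}^{\alpha_i}_j}$, $W_{t(\overline{\Delta}^{\alpha_i})}=W\setminus W_{t(\Delta^{\alpha_i})}$, $W_{t(\Delta^{\alpha_i}\cup\Gamma^{\alpha_k})}=W_{t(\Delta^{\alpha_i})}\cup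 W_{t(\Gamma^{\alpha_k})}$. A $\mathsf{TLAE}$-frame is an $\mathcal{L}$-frame satisfying: (pA3) if $R_{\mathsf{A}}wu$ and $R_{\mathsf{A}}wv$ then $u=v$; (pA4) if $R_{\mathsf{A}}wu$ then $R_\Box wu$; (pA5) for every $w$, all pairwise distinct agents $\alpha_{1},\dots,\alpha_{k}$ and (not necessarily distinct) $\Delta_1,\dots,\Delta_k\in\mathtt{Action}^*$: if for each $i$ there is $u_i$ with $R_\Box wu_i$ and $u_i\in W_{t(\Delta_i^{\alpha_i})}$, then there is $v$ with $R_\Box wv$ and $v\in W_{t(\Delta_1^{\alpha_1})}\cap\dots\cap W_{t(\Delta_k^{\alpha_k})}$; (pA6) for every $w$ and agent $\alpha_i$: if some $v$ with $R_\Box wv$ lies in $W_{\mathfrak{e}^{\alpha_i}}$, then some $u$ with $R_\Box wu$ lies outside $W_{\mathfrak{e}^{\alpha_i}}$; (pA10;A11) $R_\Box wv$ iff $R_\blacksquare vw$; (pA12) if $R_\blacksquare wu$ and $R_\blacksquare wv$ then $u=v$; (pA9;A14) $R_{\mathsf{H}}$ is the transitive closure of $R_\blacksquare$; (pA13) for every $w$, either there is no $v$ with $R_{\mathsf{H}}wv$, or there is $u$ with $R_{\mathsf{H}}wu$ such that there is no $z$ with $R_{\mathsf{H}}uz$. *)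

(* Defs.v *)
From mathcomp Require Import all_boot.
From Stdlib Require Import Relations.
Unset Implicit Arguments.

Inductive actType (Action : Type) : Type :=
| AAtom : Action -> actType Action
| AUnion : actType Action -> actType Action -> actType Action
| ACompl : actType Action -> actType Action.

Record Lframe (Agent Action : Type) := {
  W : Type;
  Wd : Agent -> Action -> W -> Prop;
  We : Agent -> W -> Prop;
  RBox : W -> W -> Prop;
  RA : W -> W -> Prop;
  RBl : W -> W -> Prop;
  RH : W -> W -> Prop
}.
Arguments W {Agent Action} _.
Arguments Wd {Agent Action} _ _ _ _.
Arguments We {Agent Action} _ _ _.
Arguments RBox {Agent Action} _ _ _.
Arguments RA {Agent Action} _ _ _.
Arguments RBl {Agent Action} _ _ _.
Arguments RH {Agent Action} _ _ _.
Arguments AAtom {Action} _.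
Arguments AUnion {Action} _ _.
Arguments ACompl {Action} _.

Fixpoint Wt (Agent Action : Type) (F : Lframe Agent Action) (a : Agent)
    (D : actType Action) : W F -> Prop :=
  match D with
  | AAtom j => Wd F a j
  | AUnion D1 D2 => fun w => Wt Agent Action F a D1 w \/ Wt Agent Action F a D2 w
  | ACompl D1 => fun w => ~ Wt Agent Action F a D1 w
  end.
Arguments Wt {Agent Action} F a D.

Definition TLAE {Agent Action : finType} (F : Lframe Agent Action) : Prop :=
  (forall w u v, RA F w u -> RA F w v -> u = v) /\
  (forall w u, RA F w u -> RBox F w u) /\
  (forall (w : W F) (k : nat) (ag : 'I_k -> Agent) (D : 'I_k -> actType Action),
      0 < k -> injective ag ->
      (forall i, exists u, RBox F w u /\ Wt F (ag i) (D i) u) ->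
      exists v, RBox F w v /\ forall i, Wt F (ag i) (D i) v) /\
  (forall (w : W F) (a : Agent),
      (exists v, RBox F w v /\ We F a v) ->
      exists u, RBox F w u /\ ~ We F a u) /\
  (forall w v, RBox F w v <-> RBl F v w) /\
  (forall w u v, RBl F w u -> RBl F w v -> u = v) /\
  (forall w v, RH F w v <-> clos_trans _ (RBl F) w v) /\
  (forall w, (forall v, ~ RH F w v) \/
             exists u, RH F w u /\ forall z, ~ RH F u z).

Definition acyclic {T : Type} (R : T -> T -> Prop) : Prop :=
  forall (k : nat) (w : nat -> T),
    0 < k -> w k = w 0 -> (forall i, i < k -> R (w i) (w i.+1)) -> False.

(* Main.v *)
Require Import Defs.
From mathcomp Require Import all_boot.
From Stdlib Require Import Relations.

Lemma path_fwd {T} (R : T -> T -> Prop) (w : nat -> T) k :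
  (forall i, i < k -> R (w i) (w i.+1)) ->
  forall n, 0 < n -> n <= k -> clos_trans _ R (w 0) (w n).
Proof.
move=> H; elim=> [//|n IH] _ Hn.
case: n IH Hn => [|n] IH Hn; first by apply: t_step; apply: H.
apply: t_trans (IH isT (ltnW Hn)) _; apply: t_step; exact: H.
Qed.

Lemma path_bwd {T} (R : T -> T -> Prop) (w : nat -> T) k :
  (forall i, i < k -> R (w i.+1) (w i)) ->
  forall n, 0 < n -> n <= k -> clos_trans _ R (w n) (w 0).
Proof.
move=> H; elim=> [//|n IH] _ Hn.
case: n IH Hn => [|n] IH Hn; first by apply: t_step; apply: H.
apply: t_trans _ (IH isT (ltnW Hn)); apply: t_step; exact: H.
Qed.

Lemma func_cycle {T} (R : T -> T -> Prop) w :
  (forall x u v, R x u -> R x v -> u = v) ->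
  clos_trans _ R w w ->
  forall u, clos_trans _ R w u -> clos_trans _ R u w \/ u = w.
Proof.
move=> Hf Hw.
have step : forall u u', (clos_trans _ R u w \/ u = w) -> R u u' ->
    clos_trans _ R u' w \/ u' = w.
  move=> u u' Hu Hr.
  have Hc : clos_trans _ R u w by case: Hu => [//|->].
  apply clos_trans_t1n in Hc; case: Hc => [y Hy|y z Hy Hz].
  - by right; apply: (Hf u).
  - left; rewrite (Hf u u' y Hr Hy); exact: clos_t1n_trans.
move=> u Hu0; have Hu := clos_trans_tn1 _ _ _ _ Hu0; clear Hu0; elim: Hu => [y Hy|y z Hy _ IH].
- exact: step (or_intror erefl) Hy.
- exact: step IH Hy.
Qed.

Theorem mainTheorem2 (Agent Action : finType) (F : Lframe Agent Action) :
  TLAE F ->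
  acyclic (RBox F) /\ acyclic (RBl F) /\ acyclic (RH F) /\ acyclic (RA F).
Proof.
case=> _ [HA4 [_ [_ [HBB [HBl [HH HA13]]]]]].
have noc : forall w, clos_trans _ (RBl F) w w -> False.
  move=> w Hw.
  case: (HA13 w) => [H1|[u [Hu Hz]]].
  - by apply: (H1 w); apply/HH.
  - case: (func_cycle _ _ HBl Hw u (proj1 (HH w u) Hu)) => [Hc|E].
    + by apply: (Hz w); apply/HH.
    + by subst u; apply: (Hz w); apply/HH.
have blc : acyclic (RBl F).
  move=> k w Hk Ek Hs; apply: (noc (w 0)).
  by rewrite -{2}Ek; apply: (path_fwd _ _ k Hs).
have boxc : acyclic (RBox F).
  move=> k w Hk Ek Hs; apply: (noc (w 0)).
  rewrite -{1}Ek; apply: (path_bwd _ _ k) => // i Hi; apply/HBB; exact: Hs.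
split; first exact: boxc.
split; first exact: blc.
split; last first.
  move=> k w Hk Ek Hs; apply: (boxc k w Hk Ek) => i Hi; apply: HA4; exact: Hs.
move=> k w Hk Ek Hs; apply: (noc (w 0)).
have : clos_trans _ (RH F) (w 0) (w k) by apply: (path_fwd _ _ k Hs).
have tc : forall a b, clos_trans _ (RH F) a b -> clos_trans _ (RBl F) a b.
  move=> a b; elim=> [x y /HH //|x y z _ IH1 _ IH2]; exact: t_trans IH1 IH2.
by rewrite Ek => /tc.
Qed.
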